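(* Suppose $X$ is a Suslin line. Then $\pi Nt(X)\geq\omega_1$.
   Context: A Suslin line is a linearly ordered set with the order topology that has the countable chain condition (every family of pairwise disjoint nonempty open sets is countable) but is not separable. Families of open sets are ordered by inclusion; a family is $\kappa^{\mathrm{op}}$-like if no member is contained in $\kappa$-many members. $\pi Nt(X)$ is the least $\kappa\geq\omega$ such that $X$ has a $\kappa^{\mathrm{op}}$-like $\pi$-base. *)

(* Defs.v *)
From HB Require Import structures.
From mathcomp Require Import all_boot all_order all_algebra.
From mathcomp Require Import all_classical all_reals all_analysis.
Set Implicit Arguments. Unset Strict Implicit. Unset Printing Implicit Defensive.
Import Order.TTheory.
Local Open Scope classical_set_scope.
Local Open Scope card_scope.

Definition separable (X : topologicalType) : Prop :=
  exists D : set X, countable D /\ dense D.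

Definition ccc (X : topologicalType) : Prop :=
  forall F : set (set X),
    (forall U, F U -> open U /\ U !=set0) ->
    (forall U V, F U -> F V -> U <> V -> U `&` V = set0) ->
    countable F.

Definition suslin_line d (X : orderTopologicalType d) : Prop :=
  ccc X /\ ~ separable X.

Definition pi_base (X : topologicalType) (B : set (set X)) : Prop :=
  (forall U, B U -> open U /\ U !=set0) /\
  (forall O, open O -> O !=set0 -> exists2 U, B U & U `<=` O).

(* B is kappa^op-like (kappa the cardinality of K): no member of B is
   contained in kappa-many members of B *)
Definition op_like (X : Type) (I : Type) (K : set I) (B : set (set X)) : Prop :=
  forall U, B U -> ~ (K #<= [set V | B V /\ U `<=` V]).

(* piNt(X) >= omega_1: X has no kappa^op-like pi-base for any infinite
   kappa < omega_1, i.e. for kappa = omega *)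
Definition piNt_ge_omega1 (X : topologicalType) : Prop :=
  forall B : set (set X), pi_base B -> ~ op_like [set: nat] B.

(* Main.v *)
Require Import Defs.
From HB Require Import structures.
From mathcomp Require Import all_boot all_order all_algebra finmap.
From mathcomp Require Import all_classical all_reals all_analysis.
Set Warnings "-all".
Set Implicit Arguments. Unset Strict Implicit. Unset Printing Implicit Defensive.
Import Order.TTheory.
Local Open Scope order_scope.
Local Open Scope classical_set_scope.

Lemma countableU' T (A B : set T) : countable A -> countable B -> countable (A `|` B).
Proof.
move=> cA cB.
have : countable (\bigcup_(b in [set: bool]) (if b then A else B)).
  by apply: bigcup_countable => // -[].
apply: sub_countable; apply: subset_card_le => x [Ax|Bx].
  by exists true.
by exists false.
Qed.

Lemma countable_subsing T (S : set T) : (forall x y, S x -> S y -> x = y) -> countable S.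
Proof.
move=> h; have [[x Sx]|S0] := pselect (S !=set0).
  apply: (sub_countable _ (countable1 x)); apply: subset_card_le => y Sy.
  exact: h.
suff -> : S = set0 by [].
by apply/seteqP; split=> // y Sy; apply: S0; exists y.
Qed.

Section S.
Context {d : Order.disp_t} {X : orderTopologicalType d}.
Implicit Types (x y z t a b c : X).

Definition seg a b t := ((a <= t) && (t <= b)) || ((b <= t) && (t <= a)).

Lemma seg_sym a b t : seg a b t = seg b a t.
Proof. by rewrite /seg orbC. Qed.

Lemma seg_split a b c t : seg a c t -> seg a b t \/ seg b c t.
Proof.
rewrite /seg => /orP[/andP[at1 tc]|/andP[ct ta]].
  have [tb|bt] := leP t b.
    by left; rewrite at1.
  by right; rewrite (ltW bt) tc.
have [tb|bt] := leP t b.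
  by right; rewrite ct orbT.
by left; rewrite (ltW bt) ta orbT.
Qed.

Lemma seg_refl a t : seg a a t -> t = a.
Proof.
by rewrite /seg orbb => /andP[h1 h2]; apply/eqP; rewrite eq_le h1 h2.
Qed.

Lemma seg_end a b : seg a b b.
Proof. by rewrite /seg lexx !andbT; exact: le_total. Qed.

Definition K (V : set X) x := [set z | forall t, seg x z t -> V t].

Lemma K_trans V x y z : K V x y -> K V y z -> K V x z.
Proof. by move=> h1 h2 t /(seg_split y) [/h1|/h2]. Qed.

Lemma K_sym V x y : K V x y -> K V y x.
Proof. by move=> h t; rewrite seg_sym => /h. Qed.

Lemma K_self V x : V x -> K V x x.
Proof. by move=> Vx t /seg_refl ->. Qed.

Lemma K_sub V x : K V x `<=` V.
Proof. by move=> z h; apply: h; exact: seg_end. Qed.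

Lemma K_eq V x y w : K V x w -> K V y w -> K V x = K V y.
Proof.
move=> hx hy; apply/seteqP; split=> z hz.
  exact: (K_trans hy (K_trans (K_sym hx) hz)).
exact: (K_trans hx (K_trans (K_sym hy) hz)).
Qed.

Lemma itv_convex (i : interval X) a b t : a \in i -> b \in i -> seg a b t -> t \in i.
Proof.
case: i => bl br; rewrite !itv_boundlr => /andP[la ra] /andP[lb rb].
rewrite /seg => /orP[/andP[h1 h2]|/andP[h1 h2]].
  rewrite (le_trans la) ?leBSide //= (le_trans _ rb) // leBSide //.
rewrite (le_trans lb) ?leBSide //= (le_trans _ ra) // leBSide //.
Qed.

Lemma K_open V x : open V -> open (K V x).
Proof.
move=> oV; rewrite openE => z hz.
have := (K_sub hz); move: oV; rewrite openE => /[apply].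
rewrite /interior itv_nbhsE => -[i [oi zi] iV].
exists i => //.
move=> w wi; apply: (K_trans hz) => t st; apply: iV.
exact: (itv_convex zi wi st).
Qed.


Lemma maxdisj (hc : ccc X) (G : set (set X)) : (forall U, G U -> open U /\ U !=set0) ->
  exists F : set (set X), [/\ F `<=` G, countable F,
    (forall U V, F U -> F V -> U `&` V !=set0 -> U = V) &
    (forall U, G U -> exists2 V, F V & U `&` V !=set0)].
Proof.
move=> hG; have [F [FG tF mF]] := ex_maximal_disjoint_subcollection id G.
exists F; split => //.
- apply: hc; first by move=> U FU; exact: hG (FG _ FU).
  move=> U V FU FV UV; apply/seteqP; split=> // y [Uy Vy]; apply: UV.
  by apply: tF => //; exists y.
- move=> U GU; apply: contrapT => hn.
  have FU : ~ F U.
    move=> FU; apply: hn; exists U => //.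
    by have [y Uy] := (hG U GU).2; exists y.
  apply: (mF (F `|` [set U])).
  + split; first by move=> W FW; left.
    by move=> /(_ U (or_intror erefl)).
  + by move=> W [FW|->]; [exact: FG|].
  + move=> i j [Fi| ->] [Fj| ->] hij //.
    * exact: tF.
    * by exfalso; apply: hn; exists i => //; rewrite setIC.
    * by exfalso; apply: hn; exists j.
Qed.

Lemma itv_oo_left (e e' b b' t : X) : `]e, b[ = `]e', b'[ ->
  `]e, b[ t -> e = e'.
Proof.
move=> h ht; have ht' : `]e', b'[ t by rewrite -h.
move: ht ht'; rewrite /= !in_itv /= => /andP[et tb] /andP[e't tb'].
have [ee'|e'e|//] := ltgtP e e'.
- have : `]e, b[ e' by rewrite /= in_itv /= ee' (lt_trans e't tb).
  by rewrite h /= in_itv /= ltxx.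
- have : `]e', b'[ e by rewrite /= in_itv /= e'e (lt_trans et tb').
  by rewrite -h /= in_itv /= ltxx.
Qed.

Lemma itv_oo_right (e e' b b' t : X) : `]b, e[ = `]b', e'[ ->
  `]b, e[ t -> e = e'.
Proof.
move=> h ht; have ht' : `]b', e'[ t by rewrite -h.
move: ht ht'; rewrite /= !in_itv /= => /andP[bt te] /andP[b't te'].
have [ee'|e'e|//] := ltgtP e e'.
- have : `]b', e'[ e by rewrite /= in_itv /= ee' (lt_trans b't te).
  by rewrite -h /= in_itv /= ltxx andbF.
- have : `]b, e[ e' by rewrite /= in_itv /= e'e (lt_trans bt te').
  by rewrite h /= in_itv /= ltxx andbF.
Qed.


Lemma coinit (hc : ccc X) (A : set X) :
  exists C, [/\ countable C, C `<=` A & forall a, A a -> exists2 c, C c & c <= a].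
Proof.
pose G := [set W : set X | W !=set0 /\ exists a b, [/\ A a, A b & W = `]a, b[] ].
have hG : forall U, G U -> open U /\ U !=set0.
  by move=> U [U0 [a [b [_ _ E]]]]; split=> //; rewrite E.
have [F [FG cF tF mF]] := maxdisj hc hG.
pose Cm := [set m | A m /\ forall a, A a -> m <= a].
pose Ce := \bigcup_(W in F) [set e | A e /\ exists b, W = `]e, b[ ].
exists (Cm `|` Ce); split.
- apply: countableU'.
    apply: countable_subsing => m m' [Am hm] [Am' hm'].
    by apply/eqP; rewrite eq_le hm // hm'.
  apply: bigcup_countable => // W FW; apply: countable_subsing.
  move=> e e' [_ [b hb]] [_ [b' hb']].
  have [[t Wt] _] := FG W FW.
  rewrite hb in Wt; apply: (itv_oo_left (b' := b') _ Wt).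
  by rewrite -hb -hb'.
- by move=> c [[Ac _]|[W _ [Ac _]]].
- move=> a Aa; apply: contrapT => hn.
  have hlt : forall c, Cm c \/ Ce c -> a < c.
    move=> c hcc; rewrite ltNge; apply/negP => ca; apply: hn; exists c => //.
  have below : forall x, A x -> x <= a -> exists2 y, A y & y < x.
    move=> x Ax xa; apply: contrapT => hx.
    have Cmx : Cm x.
      split => // y Ay; rewrite leNgt; apply/negP => yx; apply: hx; by exists y.
    by have := hlt x (or_introl Cmx); rewrite ltNge xa.
  have [a1 A1 a1a] := below a Aa (lexx a).
  have [a2 A2 a21] := below a1 A1 (ltW a1a).
  have [a3 A3 a32] := below a2 A2 (ltW (lt_trans a21 a1a)).
  have GW0 : G `]a3, a1[.
    split; first by exists a2; rewrite /= in_itv /= a32 a21.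
    by exists a3, a1; split.
  have [W FW [t [t0 tW]]] := mF _ GW0.
  have [_ [p [q [Ap Aq WE]]]] := FG W FW.
  have Cep : Ce p by exists W => //; split => //; exists q.
  have ap := hlt p (or_intror Cep).
  rewrite WE in tW; move: t0 tW; rewrite /= !in_itv /= => /andP[_ ta1] /andP[pt _].
  have := lt_trans ap (lt_trans pt (lt_trans ta1 a1a)).
  by rewrite ltxx.
Qed.

Lemma cofin (hc : ccc X) (A : set X) :
  exists C, [/\ countable C, C `<=` A & forall a, A a -> exists2 c, C c & a <= c].
Proof.
pose G := [set W : set X | W !=set0 /\ exists a b, [/\ A a, A b & W = `]a, b[] ].
have hG : forall U, G U -> open U /\ U !=set0.
  by move=> U [U0 [a [b [_ _ E]]]]; split=> //; rewrite E.
have [F [FG cF tF mF]] := maxdisj hc hG.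
pose Cm := [set m | A m /\ forall a, A a -> a <= m].
pose Ce := \bigcup_(W in F) [set e | A e /\ exists b, W = `]b, e[ ].
exists (Cm `|` Ce); split.
- apply: countableU'.
    apply: countable_subsing => m m' [Am hm] [Am' hm'].
    by apply/eqP; rewrite eq_le hm // hm'.
  apply: bigcup_countable => // W FW; apply: countable_subsing.
  move=> e e' [_ [b hb]] [_ [b' hb']].
  have [[t Wt] _] := FG W FW.
  rewrite hb in Wt; apply: (itv_oo_right (b' := b') _ Wt).
  by rewrite -hb -hb'.
- by move=> c [[Ac _]|[W _ [Ac _]]].
- move=> a Aa; apply: contrapT => hn.
  have hlt : forall c, Cm c \/ Ce c -> c < a.
    move=> c hcc; rewrite ltNge; apply/negP => ca; apply: hn; exists c => //.
  have above : forall x, A x -> a <= x -> exists2 y, A y & x < y.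
    move=> x Ax xa; apply: contrapT => hx.
    have Cmx : Cm x.
      split => // y Ay; rewrite leNgt; apply/negP => yx; apply: hx; by exists y.
    by have := hlt x (or_introl Cmx); rewrite ltNge xa.
  have [a1 A1 a1a] := above a Aa (lexx a).
  have [a2 A2 a21] := above a1 A1 (ltW a1a).
  have [a3 A3 a32] := above a2 A2 (ltW (lt_trans a1a a21)).
  have GW0 : G `]a1, a3[.
    split; first by exists a2; rewrite /= in_itv /= a32 a21.
    by exists a1, a3; split.
  have [W FW [t [t0 tW]]] := mF _ GW0.
  have [_ [p [q [Ap Aq WE]]]] := FG W FW.
  have Cep : Ce q by exists W => //; split => //; exists p.
  have qa := hlt q (or_intror Cep).
  rewrite WE in tW; move: t0 tW; rewrite /= !in_itv /= => /andP[a1t _] /andP[_ tq].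
  have := lt_trans qa (lt_trans a1a (lt_trans a1t tq)).
  by rewrite ltxx.
Qed.


Definition convex (O : set X) := forall a b t, O a -> O b -> a <= t <= b -> O t.

Lemma decide (hc : ccc X) (V : set X) : open V -> exists E : set X,
  [/\ countable E, E `<=` V, (V !=set0 -> E !=set0) &
    forall O : set X, convex O -> O `&` E = set0 -> O `&` V !=set0 -> O `<=` V].
Proof.
move=> oV.
have /choice[ci hci] := coinit hc.
have /choice[cf hcf] := cofin hc.
pose D := K V @` V.
exists (\bigcup_(A in D) (ci A `|` cf A)); split.
- apply: bigcup_countable.
  + apply: hc.
    * by move=> A [x Vx <-]; split; [exact: K_open | exists x; exact: K_self].
    * move=> A B [x Vx <-] [y Vy <-] hne; apply/seteqP; split=> // w [hx hy].
      by apply: hne; exact: K_eq hx hy.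
  + by move=> A _; have [? _ _] := hci A; have [? _ _] := hcf A; exact: countableU'.
- move=> e [A [x Vx <-]] [h|h]; apply: (@K_sub V x).
    by case: (hci (K V x)) => _ + _; apply.
  by case: (hcf (K V x)) => _ + _; apply.
- move=> [x Vx]; have [_ _ h] := hci (K V x); have [c cc _] := h x (K_self Vx).
  by exists c; exists (K V x); [exists x|left].
- move=> O cO OE [x [Ox Vx]] y Oy.
  have [_ subi hi] := hci (K V x); have [_ subf hf] := hcf (K V x).
  have EO : forall c, (ci (K V x) `|` cf (K V x)) c -> ~ O c.
    move=> c hcE Oc.
    have : (O `&` \bigcup_(A in D) (ci A `|` cf A)) c.
      by split=> //; exists (K V x) => //; exists x.
    by rewrite OE.
  have [yx|xy] := leP y x.
  + have [c cc cx] := hi x (K_self Vx).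
    have Kc := subi c cc.
    have [cy|yc] := leP c y.
      by apply: Kc; rewrite /seg cy yx orbT.
    exfalso; apply: (EO c); first by left.
    by apply: (cO y x c) => //; rewrite (ltW yc) cx.
  + have [c cc cx] := hf x (K_self Vx).
    have Kc := subf c cc.
    have [yc|cy] := leP y c.
      by apply: Kc; rewrite /seg yc (ltW xy).
    exfalso; apply: (EO c); first by right.
    by apply: (cO x y c) => //; rewrite (ltW cy) cx.
Qed.

End S.

Theorem theorem2p26 (d : Order.disp_t) (X : orderTopologicalType d) :
  suslin_line X -> piNt_ge_omega1 X.
Proof.
move=> [hc hns] B [hBo hBb] hlike.
pose S (U : set X) := [set W | B W /\ U `<=` W].
have finS : forall U, B U -> finite_set (S U).
  move=> U BU; apply: contrapT => hinf; apply: (hlike U BU); exact/infiniteP.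
pose lvl U := #|` fset_set (S U)|%fset.
have lvl_eq : forall U V, B U -> B V -> U `<=` V -> lvl U = lvl V -> U = V.
  move=> U V BU BV UV hl; apply: contrapT => UnV.
  have sub : S V `<=` S U.
    by move=> W [BW VW]; split=> //; exact: subset_trans UV VW.
  have fsub : (fset_set (S V) `<=` fset_set (S U))%fset.
    by rewrite -fset_set_sub //; apply: finS.
  have [_] := fsubset_leqif_cards fsub.
  rewrite /lvl in hl; rewrite hl eqxx => /esym/eqP eqS.
  have : U \in fset_set (S U).
    by rewrite in_fset_set; [apply/mem_set; split | exact: finS].
  rewrite -eqS in_fset_set; last exact: finS.
  move=> /set_mem [_ VU].
  by apply: UnV; apply/seteqP; split.
pose Bn n := [set U | B U /\ lvl U = n].
have hCn0 : forall n, exists F : set (set X), [/\ F `<=` Bn n, countable F,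
    (forall U V, F U -> F V -> U `&` V !=set0 -> U = V) &
    (forall U, Bn n U -> exists2 V, F V & U `&` V !=set0)].
  by move=> n; apply: maxdisj => // U [BU _]; exact: hBo.
have /choice[Cn hCn] := hCn0.
pose C := \bigcup_(n in [set: nat]) Cn n.
have hdec0 : forall V : set X, exists E : set X, open V -> [/\ countable E, E `<=` V,
    (V !=set0 -> E !=set0) &
    forall O : set X, convex O -> O `&` E = set0 -> O `&` V !=set0 -> O `<=` V].
  move=> V; have [oV|noV] := pselect (open V).
    by have [E hE] := decide hc oV; exists E.
  by exists set0.
have /choice[f hf] := hdec0.
pose E := \bigcup_(V in C) f V.
apply: hns; exists E; split.
- apply: bigcup_countable.
    apply: bigcup_countable; first exact: countableP.
    by move=> n _; case: (hCn n).
  move=> V [n _ CV]; have [CB _ _ _] := hCn n.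
  have [oV _] := hBo V (CB V CV).1.
  by case: (hf V oV).
- move=> A [x Ax] oA; apply: contrapT => hAE.
  have AE : A `&` E = set0.
    by apply/seteqP; split=> // y Ay; apply: hAE; exists y.
  have : nbhs x A by move: oA; rewrite openE => /(_ x Ax).
  rewrite itv_nbhsE => -[i [oi xi] iA].
  pose O : set X := [set` i].
  have oO : open O := itv_open_ends_open oi.
  have [U BU UO] := hBb O oO (ex_intro _ x xi).
  have [CB _ _ mC] := hCn (lvl U).
  have [V CV [w [Uw Vw]]] := mC U (conj BU erefl).
  have [BV lV] := CB V CV.
  have [oV V0] := hBo V BV.
  have [_ fV fV0 dec] := hf V oV.
  have OfV : O `&` f V = set0.
    apply/seteqP; split=> // y [Oy fy].
    have : (A `&` E) y.
      by split; [exact: iA | exists V => //; exists (lvl U)].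
    by rewrite AE.
  have OV : O `<=` V.
    apply: dec => //.
      move=> a b t Oa Ob abt; apply: (itv_convex Oa Ob).
      by rewrite /seg abt.
    by exists w; split => //; exact: UO.
  have UV : U = V.
    by apply: (lvl_eq _ _ BU BV (subset_trans UO OV)); rewrite lV.
  have [e fe] := fV0 V0.
  have : (O `&` f V) e.
    by split => //; apply: UO; rewrite UV; exact: fV.
  by rewrite OfV.
Qed.
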